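(* For any $\ell,h\in\mathbb{N}$ there is $C>0$ such that the following holds. If $\mathcal{H}$ is an $\ell$-configuration of size $h$, $\varepsilon\in(0,1)$, and $\mathcal{F}_1,\dots,\mathcal{F}_h\subset[m]^n$ each satisfy $\mu(\mathcal{F}_i)>\varepsilon$, where $n>C\log(\varepsilon^{-1})$ and $m>2hn/\varepsilon$, then $\mathcal{F}_1,\dots,\mathcal{F}_h$ cross contain $\mathcal{H}$.
   Context: $\mu$ is the uniform probability measure on $[m]^n$. An $\ell$-configuration is a multiset $\mathcal{H}=\{e_1,\dots,e_h\}$ of $\ell$-element edges on a finite vertex set partitioned into parts $U_1,\dots,U_\ell$, each edge having exactly one vertex in each part; its size is $h$. $\mathcal{F}_1,\dots,\mathcal{F}_h$ cross contain $\mathcal{H}$ if there are $x^j\in\mathcal{F}_j$ ($j\in[h]$) and an injection $\Phi:[\ell]\to[n]$ such that for all distinct $j,j'\in[h]$ and all $i\in[n]$: $x^j_i=x^{j'}_i$ holds exactly when $i=\Phi(k)$ for some $k\in[\ell]$ with $e_j\cap e_{j'}\cap U_k\neq\emptyset$. *)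

(* Defs.v *)
From mathcomp Require Import all_boot.
From Stdlib Require Import Reals.

Set Implicit Arguments.
Unset Strict Implicit.
Unset Printing Implicit Defensive.

(* [m]^n is represented as {ffun 'I_n -> 'I_m} (coordinates indexed by 'I_n,
   values in 'I_m = {0,..,m-1}). *)
Definition cube (m n : nat) := {ffun 'I_n -> 'I_m}.

Definition mu (m n : nat) (F : {set cube m n}) : R :=
  (INR #|F| / INR (m ^ n)%nat)%R.

(* An l-configuration of size h: edges e_0,..,e_{h-1}; the vertex of edge e_j
   in part U_k is encoded by the label [H j k : nat] (vertices of different
   parts are distinct since parts are disjoint; vertices of U_k are labelled
   by naturals).  Thus e_j /\ e_j' /\ U_k <> empty  iff  H j k = H j' k.
   Repeated edges (multiset) are allowed. *)
Definition configuration (l h : nat) := 'I_h -> 'I_l -> nat.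

Definition cross_contain (l h m n : nat) (H : configuration l h)
    (F : 'I_h -> {set cube m n}) : Prop :=
  exists (x : 'I_h -> cube m n) (Phi : 'I_l -> 'I_n),
    (forall j, x j \in F j) /\ injective Phi /\
    (forall j j' : 'I_h, j != j' -> forall i : 'I_n,
        x j i = x j' i <-> exists k : 'I_l, i = Phi k /\ H j k = H j' k).

(* Main.v *)
Require Import Defs.
From mathcomp Require Import all_boot.
From Stdlib Require Import Reals Lra Lia Psatz.
From mathcomp Require Import zify.
Import ssrnat.

Set Implicit Arguments.
Unset Strict Implicit.
Unset Printing Implicit Defensive.

Section Counting.
Variables (m n : nat).

Definition agree (x w : cube m n) (t : nat) :=
  [forall i : 'I_n, (i < t) ==> (x i == w i)].
Definition cnt (F : {set cube m n}) (w : cube m n) (t : nat) :=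
  #|[set x in F | agree x w t]|.
Definition upd (w : cube m n) (t : nat) (a : 'I_m) : cube m n :=
  [ffun i => if val i == t then a else w i].

Lemma cnt_split F w t (ht : t < n) :
  cnt F w t = \sum_(a : 'I_m) cnt F (upd w t a) t.+1.
Proof.
rewrite /cnt -sum1_card (partition_big (fun x : cube m n => x (Ordinal ht)) predT) //=.
apply: eq_bigr => a _; rewrite -sum1_card; apply: eq_bigl => x.
rewrite !inE; case: (x \in F) => //=.
apply/idP/idP.
- case/andP=> /forallP Ha /eqP Hxa; apply/forallP => i; apply/implyP => hi.
  rewrite ffunE; case: (val i =P t) => [Ei|Ni].
  + by rewrite -Hxa; apply/eqP; congr (x _); apply: val_inj.
  + have hi' : i < t by move: hi; rewrite ltnS leq_eqVlt => /orP[/eqP|].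
    by move: (Ha i); rewrite hi'.
- move/forallP => Ha; apply/andP; split.
  + apply/forallP => i; apply/implyP => hi.
    have := Ha i; rewrite (leq_trans hi (leqnSn _)) /= ffunE.
    by rewrite (_ : (val i == t) = false) //; apply/eqP => E; rewrite E ltnn in hi.
  + have := Ha (Ordinal ht); rewrite ltnSn /= ffunE eqxx //.
Qed.

Lemma cnt_full_gen d : forall t w, t + d = n -> cnt setT w t = m ^ d.
Proof.
elim: d => [|d IH] t w Htd.
- rewrite addn0 in Htd; subst t; rewrite expn0 /cnt.
  apply/eqP/cards1P; exists w; apply/setP => x; rewrite !inE.
  apply/forallP/eqP => [Ha|->].
  + by apply/ffunP => i; have := Ha i; rewrite ltn_ord /= => /eqP.
  + by move=> i; rewrite eqxx implybT.
- have ht : t < n by lia.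
  rewrite (cnt_split _ _ ht) (eq_bigr (fun _ => m ^ d)).
  + by rewrite sum_nat_const card_ord expnS.
  + by move=> a _; apply: IH; lia.
Qed.

Lemma cnt_le F w t : t <= n -> cnt F w t <= m ^ (n - t).
Proof.
move=> ht; rewrite -(cnt_full_gen w (_ : t + (n - t) = n)); last by lia.
by apply: subset_leq_card; apply/subsetP => x; rewrite !inE => /andP[_ ->].
Qed.

Lemma cnt0 F w : cnt F w 0 = #|F|.
Proof. by rewrite /cnt; apply: eq_card => x; rewrite !inE; case: (x \in F) => //; apply/forallP. Qed.

Lemma cnt_n F w : 0 < cnt F w n -> w \in F.
Proof.
case/card_gt0P => x; rewrite !inE => /andP[xF /forallP Ha].
suff <- : x = w by [].
by apply/ffunP => i; have := Ha i; rewrite ltn_ord /= => /eqP.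
Qed.

End Counting.

Lemma card_exists_le (T I : finType) (Q : I -> T -> bool) :
  #|[set a | [exists j, Q j a]]| <= \sum_(j : I) #|[set a | Q j a]|.
Proof.
rewrite (eq_bigr (fun j => \sum_(a : T) (Q j a : nat))); last first.
  by move=> j _; rewrite -sum1_card big_mkcond /=; apply: eq_bigr => a _; rewrite inE; case: (Q j a).
rewrite exchange_big /= -sum1_card big_mkcond /=; apply: leq_sum => a _.
rewrite inE; case: existsP => [[j Hj]|] //.
by rewrite (bigD1 j) //= Hj.
Qed.

Lemma sdr (T : finType) (hh : nat) (A : 'I_hh -> {set T}) (B : {set T}) :
  (forall j, hh + #|B| <= #|A j|) ->
  exists v : 'I_hh -> T, injective v /\ forall j, v j \in A j /\ v j \notin B.
Proof.
move=> HA.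
suff: forall r, r <= hh -> exists v : 'I_hh -> T,
   (forall j j' : 'I_hh, j < r -> j' < r -> v j = v j' -> j = j') /\
   (forall j : 'I_hh, j < r -> v j \in A j /\ v j \notin B).
  move/(_ hh (leqnn _)) => [v [Hi Hv]]; exists v; split.
  - by move=> j j'; apply: Hi.
  - by move=> j; apply: Hv.
elim=> [_|r IH Hr].
- have X : forall j : 'I_hh, {x : T | x \in A j}.
    move=> j; apply: sigW; apply/card_gt0P.
    by have := HA j; have := ltn_ord j; lia.
  by exists (fun j => sval (X j)); split.
- have [v [Hi Hv]] := IH (ltnW Hr).
  pose jr : 'I_hh := Ordinal Hr.
  pose U := B :|: [set v j | j in [set j : 'I_hh | j < r]].
  have HU : #|U| <= #|B| + r.
    apply: leq_trans (leq_card_setU _ _) _; rewrite leq_add2l.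
    apply: leq_trans (leq_imset_card _ _) _.
    rewrite -sum1_card (eq_bigl (fun j : 'I_hh => j < r)); last by move=> j; rewrite inE.
    by rewrite -(big_ord_widen _ (fun _ => 1) (ltnW Hr)) sum1_card card_ord.
  have : 0 < #|A jr :\: U|.
    rewrite cardsD; have := HA jr; have := subset_leq_card (subsetIr (A jr) U).
    by have := ltn_ord jr; rewrite /= => H1 H2 H3; lia.
  case/card_gt0P => a; rewrite !inE negb_or => /andP[/andP[aB aV] aA].
  exists (fun j => if j == jr then a else v j); split.
  + move=> j j' Hj Hj'; case: (j =P jr) => [->|Nj]; case: (j' =P jr) => [->|Nj'] //.
    * move=> E; case/negP: aV; apply/imsetP; exists j' => //; rewrite inE.
      move: Hj'; rewrite ltnS leq_eqVlt => /orP[/eqP E'|] //; case: Nj'; exact: val_inj.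
    * move=> E; case/negP: aV; apply/imsetP; exists j => //; rewrite inE.
      move: Hj; rewrite ltnS leq_eqVlt => /orP[/eqP E'|] //; case: Nj; exact: val_inj.
    * apply: Hi.
      by move: Hj; rewrite ltnS leq_eqVlt => /orP[/eqP E'|] //; case: Nj; exact: val_inj.
      by move: Hj'; rewrite ltnS leq_eqVlt => /orP[/eqP E'|] //; case: Nj'; exact: val_inj.
  + move=> j Hj; case: (j =P jr) => [->|Nj]; first by [].
    apply: Hv; move: Hj; rewrite ltnS leq_eqVlt => /orP[/eqP E'|] //; case: Nj; exact: val_inj.
Qed.

Lemma sum_in_compl (m : nat) (A : {set 'I_m}) (f : 'I_m -> nat) :
  \sum_a f a = \sum_(a in A) f a + \sum_(a in ~: A) f a.
Proof.
rewrite (bigID (fun a => a \in A)) /=; congr (_ + _).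
by apply: eq_bigl => a; rewrite inE.
Qed.

Lemma acc_card (m : nat) (c : 'I_m -> nat) (S hh : nat) :
  hh < m -> (forall a, c a <= S) -> hh * S <= \sum_a c a ->
  hh < #|[set a | \sum_a' c a' <= m * c a + hh * S]|.
Proof.
move=> hm cS hT; set T := \sum_a c a; set A := [set a | _].
rewrite ltnNge; apply/negP => hr.
have E1 : m * T = \sum_(a in A) m * c a + \sum_(a in ~: A) m * c a.
  by rewrite /T big_distrr /= (sum_in_compl A).
have E2 : \sum_(a in A) m * c a <= #|A| * (m * S).
  rewrite -sum_nat_const; apply: leq_sum => a _; by rewrite leq_mul2l cS orbT.
have E3 : \sum_(a in ~: A) m * c a + #|~: A| * (hh * S + 1) <= #|~: A| * T.
  rewrite -!sum_nat_const -big_split /=; apply: leq_sum => a; rewrite !inE -ltnNge addnA addn1; done.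
have E4 := cardsC A; rewrite card_ord in E4.
set r := #|A| in E2 E4 hr; set k := #|~: A| in E3 E4.
have hk : 1 <= k by lia.
have Em : m * T = r * T + k * T by rewrite -mulnDl E4.
have : r * T + k * (hh * S) + k <= r * (m * S).
  move: E1 E2 E3; rewrite Em mulnDr muln1; lia.
have : r * (hh * S) <= r * T by rewrite leq_mul2l hT orbT.
have : r * (m * S) <= hh * (m * S) by rewrite leq_mul2r hr orbT.
nia.
Qed.

Lemma bad_card (m K : nat) (d : 'I_m -> nat) :
  0 < m -> #|[set a | K * \sum_a' d a' < m * d a]| * K < m.
Proof.
move=> hm; set D := \sum_a d a; set B := [set a | _].
have E1 : \sum_(a in B) (K * D + 1) <= m * D.
  apply: leq_trans (_ : \sum_(a in B) m * d a <= _).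
    by apply: leq_sum => a; rewrite inE addn1.
  rewrite /D big_distrr /= (sum_in_compl B); apply: leq_addr.
rewrite sum_nat_const in E1.
case: (posnP D) => [D0|Dp].
- have -> : #|B| = 0 by move: E1; rewrite D0; nia.
  by rewrite mul0n.
- case: (posnP #|B|) => [->|Bp]; first by rewrite mul0n.
  have : #|B| * K * D < m * D by nia.
  by rewrite ltn_mul2r Dp.
Qed.

Lemma gain (m M hh : nat) (c : 'I_m -> nat) (b : 'I_m) :
  1 <= M -> (forall a, c a <= c b) -> 0 < \sum_a c a -> 2 * hh <= m ->
  m < hh * #|[set a | M * m * c a < (M - 1) * \sum_a' c a']| + hh ->
  (2 * hh * M + 1) * \sum_a c a <= 2 * hh * M * m * c b.
Proof.
move=> hM cb hT hm; set T := \sum_a c a; set B := [set a | _] => hB.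
rewrite leqNgt; apply/negP => hZ.
have E1 : 2 * hh * M * m * T =
  \sum_(a in B) 2 * hh * (M * m * c a) + \sum_(a in ~: B) 2 * hh * M * m * c a.
  rewrite /T big_distrr /= (sum_in_compl B); congr (_ + _); apply: eq_bigr => a _; lia.
have E2 : \sum_(a in B) 2 * hh * (M * m * c a) <= #|B| * (2 * hh * ((M - 1) * T)).
  rewrite -sum_nat_const; apply: leq_sum => a; rewrite inE => /ltnW H.
  by rewrite leq_mul2l H orbT.
have E3 : \sum_(a in ~: B) 2 * hh * M * m * c a <= #|~: B| * ((2 * hh * M + 1) * T).
  rewrite -sum_nat_const; apply: leq_sum => a _.
  apply: leq_trans (ltnW hZ); by rewrite leq_mul2l cb orbT.
have E4 := cardsC B; rewrite card_ord in E4.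
set beta := #|B| in E2 E4 hB; set g := #|~: B| in E3 E4.
have E5 : 2 * hh * M * m * T <= beta * (2 * hh * ((M - 1) * T)) + g * ((2 * hh * M + 1) * T) by lia.
have E6 : (2 * hh * M * m) * T <= (beta * (2 * hh * (M - 1)) + g * (2 * hh * M + 1)) * T.
  by move: E5; rewrite !mulnA !mulnDl; lia.
rewrite leq_mul2r (negbTE (lt0n_neq0 hT)) /= in E6.
have E7 : 2 * hh * beta <= g.
  move: E6; rewrite -E4; have -> : M = (M - 1) + 1 by lia.
  rewrite addnK; nia.
nia.
Qed.

Section Struct.
Variables (l h m n : nat) (H : configuration l h) (F : 'I_h -> {set cube m n}).

Definition struct (t k : nat) (w : 'I_h -> cube m n) (Phi : 'I_l -> 'I_n) : Prop :=
  (forall k' : 'I_l, k' < k -> Phi k' < t) /\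
  (forall k1 k2 : 'I_l, k1 < k -> k2 < k -> Phi k1 = Phi k2 -> k1 = k2) /\
  (forall j j' : 'I_h, j != j' -> forall i : 'I_n, i < t ->
      (w j i = w j' i <-> exists k' : 'I_l, k' < k /\ i = Phi k' /\ H j k' = H j' k')).

Lemma struct0 w Phi : struct 0 0 w Phi.
Proof. by split; [|split] => //. Qed.

Lemma struct_final w Phi : struct n l w Phi -> (forall j, w j \in F j) -> cross_contain H F.
Proof.
move=> [_ [Hinj Hw]] HF; exists w, Phi; split => //; split.
- by move=> k1 k2; apply: Hinj.
- move=> j j' Hjj' i; rewrite (Hw j j' Hjj' i (ltn_ord i)).
  split; [case=> k' [_ ?]; by exists k' | case=> k' ?; by exists k'].
Qed.

Lemma struct_distinct t k w Phi (ht : t < n) (v : 'I_h -> 'I_m) :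
  injective v -> struct t k w Phi ->
  struct t.+1 k (fun j => upd (w j) t (v j)) Phi.
Proof.
move=> vinj [H1 [H2 H3]]; split; [|split] => //.
- by move=> k' hk'; apply: leq_trans (H1 k' hk') _.
- move=> j j' Hjj' i hi; rewrite !ffunE.
  case: (val i =P t) => [Ei|Ni].
  + split.
    * by move/vinj => E; rewrite E eqxx in Hjj'.
    * case=> k' [hk' [Ei' _]]; have := H1 k' hk'; by rewrite -Ei' Ei ltnn.
  + apply: H3 => //; move: hi; rewrite ltnS leq_eqVlt => /orP[/eqP|] //.
Qed.

Lemma struct_pattern t k w Phi (ht : t < n) (hk : k < l) (G : {set 'I_m}) :
  h <= #|G| -> struct t k w Phi ->
  exists (a : 'I_h -> 'I_m) (Phi' : 'I_l -> 'I_n),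
    (forall j, a j \in G) /\ struct t.+1 k.+1 (fun j => upd (w j) t (a j)) Phi'.
Proof.
move=> hG [H1 [H2 H3]].
pose k0 : 'I_l := Ordinal hk.
pose s := [seq H j' k0 | j' <- enum 'I_h].
pose e := enum G.
have hs : size s = h by rewrite size_map size_enum_ord.
have he : size e = #|G| by rewrite /e -cardE.
have ue : uniq e by apply: enum_uniq.
have idx_lt : forall j, index (H j k0) s < h.
  move=> j; rewrite -hs index_mem; apply/mapP; exists j => //; apply: mem_enum.
have mem_s : forall j, H j k0 \in s.
  move=> j; apply/mapP; exists j => //; apply: mem_enum.
exists (fun j => nth (w j (Ordinal ht)) e (index (H j k0) s)).
exists (fun k' => if val k' == k then Ordinal ht else Phi k').
split.
- move=> j; rewrite /e -mem_enum; apply: mem_nth; rewrite he; apply: leq_trans (idx_lt j) hG.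
split; [|split].
- move=> k' hk'; case: (val k' =P k) => [//|Nk].
  apply: leq_trans (H1 k' _) _ => //.
  by move: hk'; rewrite ltnS leq_eqVlt => /orP[/eqP|].
- move=> k1 k2 hk1 hk2.
  have lt1 : val k1 != k -> k1 < k by move: hk1; rewrite ltnS leq_eqVlt => /orP[->|].
  have lt2 : val k2 != k -> k2 < k by move: hk2; rewrite ltnS leq_eqVlt => /orP[->|].
  case: (val k1 =P k) => [E1|N1]; case: (val k2 =P k) => [E2|N2].
  + by move=> _; apply: val_inj; rewrite E1 E2.
  + move=> E; have := H1 k2 (lt2 (introN eqP N2)); by rewrite -E ltnn.
  + move=> E; have := H1 k1 (lt1 (introN eqP N1)); by rewrite E ltnn.
  + by apply: H2; [apply: lt1; apply/eqP | apply: lt2; apply/eqP].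
- move=> j j' Hjj' i hi; rewrite !ffunE.
  case: (val i =P t) => [Ei|Ni].
  + have lt' : forall jj, index (H jj k0) s < size e.
      by move=> jj; rewrite he; apply: leq_trans (idx_lt jj) hG.
    rewrite (set_nth_default (w j' (Ordinal ht)) (w j (Ordinal ht)) (lt' j)).
    split.
    * move/eqP; rewrite nth_uniq // => /eqP Eidx.
      exists k0; split => //; split.
      -- by apply: val_inj; rewrite /= eqxx.
      -- by rewrite -(nth_index (H j k0) (mem_s j)) Eidx nth_index.
    * case=> k' [hk' [Ei' EH]].
      move: Ei'; case: (val k' =P k) => [Ek|Nk] /= Ei'.
      -- have Ek' : k' = k0 by apply: val_inj.
         by rewrite Ek' in EH; rewrite EH.
      -- have lt : k' < k by move: hk'; rewrite ltnS leq_eqVlt => /orP[/eqP|].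
         have := H1 k' lt; by rewrite -Ei' Ei ltnn.
  + have hi' : i < t by move: hi; rewrite ltnS leq_eqVlt => /orP[/eqP|].
    rewrite (H3 j j' Hjj' i hi'); split.
    * case=> k' [hk' [Ei' EH]]; exists k'; split; first by apply: ltnW.
      case: (val k' =P k) => [Ek|Nk]; last by [].
      by move: hk'; rewrite Ek ltnn.
    * case=> k' [hk' [Ei' EH]]; exists k'.
      move: Ei'; case: (val k' =P k) => [Ek|Nk] /= Ei'.
      -- by case: Ni; rewrite Ei'.
      -- split => //; by move: hk'; rewrite ltnS leq_eqVlt => /orP[/eqP|].
Qed.

End Struct.

Lemma final_stage (l h m n : nat) (H : configuration l h) (F : 'I_h -> {set cube m n}) :
  h < m -> forall d t w Phi, t + d = n -> struct H t l w Phi ->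
  (forall j, m ^ (n - t) * ((n - t) * h) < m * cnt (F j) (w j) t) -> cross_contain H F.
Proof.
move=> hm; elim=> [|d IH] t w Phi htd Hs Hc.
- rewrite addn0 in htd; subst t.
  apply: (struct_final Hs) => j; apply: cnt_n.
  by have := Hc j; rewrite subnn mul0n muln0; case: (cnt _ _ _) => //; rewrite muln0.
- have ht : t < n by lia.
  set S := m ^ (n - t.+1).
  have ES : m ^ (n - t) = m * S by rewrite /S -expnS; congr (_ ^ _); lia.
  pose A j := [set a | cnt (F j) (w j) t <= m * cnt (F j) (upd (w j) t a) t.+1 + h * S].
  have HA : forall j, h + #|(set0 : {set 'I_m})| <= #|A j|.
    move=> j; rewrite cards0 addn0; rewrite /A (cnt_split _ _ ht).
    apply/ltnW/(acc_card (c := fun a => cnt (F j) (upd (w j) t a) t.+1)) => //.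
    + by move=> a; apply: cnt_le.
    + rewrite -(cnt_split _ _ ht); have := Hc j; rewrite ES => Hcj.
      have : S * ((n - t) * h) < cnt (F j) (w j) t.
        by rewrite -(ltn_pmul2l (leq_ltn_trans (leq0n h) hm)) mulnA.
      have : 1 <= n - t by lia.
      nia.
  have [v [vinj Hv]] := sdr HA.
  apply: (IH t.+1 (fun j => upd (w j) t (v j)) Phi); first by lia.
  + exact: struct_distinct.
  + move=> j; have [Hvj _] := Hv j; move: Hvj; rewrite inE (cnt_split _ _ ht) -/S => Hvj.
    rewrite -(cnt_split _ _ ht) in Hvj.
    have := Hc j; rewrite ES => Hcj.
    have : S * ((n - t) * h) < cnt (F j) (w j) t.
      by rewrite -(ltn_pmul2l (leq_ltn_trans (leq0n h) hm)) mulnA.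
    have -> : n - t = (n - t.+1).+1 by lia.
    nia.
Qed.

Section RealHelpers.
Local Open Scope R_scope.

Lemma INR_subn (a b : nat) : (b <= a)%N -> INR (a - b) = INR a - INR b.
Proof. by move=> /leP hb; rewrite minus_INR. Qed.

Lemma INR_leq (a b : nat) : (a <= b)%N -> INR a <= INR b.
Proof. by move=> /leP; apply: le_INR. Qed.

Lemma INR_ltn (a b : nat) : (a < b)%N -> INR a < INR b.
Proof. by move=> /ltP; apply: lt_INR. Qed.

Lemma leq_INR (a b : nat) : INR a <= INR b -> (a <= b)%N.
Proof. by move=> H; apply/leP; apply: INR_le. Qed.

Lemma ltn_INR (a b : nat) : INR a < INR b -> (a < b)%N.
Proof. by move=> H; apply/ltP; apply: INR_lt. Qed.

Lemma INR_pos (a : nat) : (0 < a)%N -> 0 < INR a.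
Proof. by move=> H; apply: (INR_ltn H). Qed.

Lemma div_le (A B C : R) : 0 < B -> A <= C * B -> A / B <= C.
Proof.
move=> hB H; apply: (Rmult_le_reg_r B) => //.
rewrite /Rdiv Rmult_assoc Rinv_l; lra.
Qed.

Lemma inv_a (M m c c' S : nat) (X : R) : (1 <= M)%N -> (0 < m)%N ->
  ((M - 1) * c <= M * m * c')%N -> INR (m * S) * X <= INR c ->
  INR S * ((1 - / INR M) * X) <= INR c'.
Proof.
move=> hM hm /INR_leq H1 H2.
rewrite !mult_INR INR_subn // in H1; rewrite mult_INR in H2.
have pM : 0 < INR M by apply: INR_pos.
have pm : 0 < INR m by apply: INR_pos.
simpl in H1.
have E : INR S * ((1 - / INR M) * X) = (INR M - 1) * (INR m * INR S * X) / (INR M * INR m).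
  by field; lra.
rewrite E; apply: div_le.
- by apply: Rmult_lt_0_compat.
- have h0 : 0 <= INR M - 1 by have := INR_leq hM; simpl; lra.
  have := Rmult_le_compat_l _ _ _ h0 H2; nra.
Qed.

Lemma inv_gain (K m c c' S : nat) (X : R) : (1 <= K)%N -> (0 < m)%N ->
  ((K + 1) * c <= K * m * c')%N -> INR (m * S) * X <= INR c ->
  INR S * ((1 + / INR K) * X) <= INR c'.
Proof.
move=> hK hm /INR_leq H1 H2.
rewrite !mult_INR plus_INR in H1; rewrite mult_INR in H2.
have pK : 0 < INR K by apply: INR_pos.
have pm : 0 < INR m by apply: INR_pos.
simpl in H1.
have E : INR S * ((1 + / INR K) * X) = (INR K + 1) * (INR m * INR S * X) / (INR K * INR m).
  by field; lra.
rewrite E; apply: div_le.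
- by apply: Rmult_lt_0_compat.
- have h0 : 0 <= INR K + 1 by lra.
  have := Rmult_le_compat_l _ _ _ h0 H2; nra.
Qed.

Lemma inv_other (m h c c' S : nat) (X : R) : (0 < m)%N ->
  (c <= m * c' + h * S)%N -> INR (m * S) * X <= INR c ->
  INR S * (X - INR h / INR m) <= INR c'.
Proof.
move=> hm /INR_leq H1 H2.
rewrite !plus_INR !mult_INR in H1; rewrite mult_INR in H2.
have pm : 0 < INR m by apply: INR_pos.
have E : INR S * (X - INR h / INR m) = (INR m * INR S * X - INR h * INR S) / INR m.
  by field; lra.
rewrite E; apply: div_le => //; nra.
Qed.

Lemma inv_other2 (m h c c' S n : nat) (E : R) : (0 < m)%N -> (2 <= n)%N ->
  (c <= m * c' + h * S)%N -> (h * S * n <= 2 * c)%N -> INR (m * S) * E <= INR c ->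
  INR S * ((1 - 2 / INR n) * E) <= INR c'.
Proof.
move=> hm hn /INR_leq H1 /INR_leq H3 H2.
rewrite !plus_INR !mult_INR in H1; rewrite !mult_INR in H2 H3.
have pm : 0 < INR m by apply: INR_pos.
have pn : 2 <= INR n by have := INR_leq hn.
simpl in H3.
have E1 : INR S * ((1 - 2 / INR n) * E) = (1 - 2 / INR n) * (INR m * INR S * E) / INR m.
  by field; lra.
rewrite E1; apply: div_le => //.
have h0 : 0 <= 1 - 2 / INR n.
  have : 2 / INR n <= 1 by apply: div_le; lra.
  lra.
have H4 : INR h * INR S <= 2 / INR n * INR c.
  have E2 : 2 / INR n * INR c = (2 * INR c) / INR n by field; lra.
  by rewrite E2; apply: (Rmult_le_reg_r (INR n)); [lra | field_simplify; lra].
have := Rmult_le_compat_l _ _ _ h0 H2; nra.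
Qed.

End RealHelpers.

Definition Mc (h l : nat) := (4 * h * l.+1)%N.
Definition Kc (h l : nat) := (2 * h * Mc h l)%N.
Definition N0 (h l : nat) := (2 * l + 20 * h * Kc h l + 8)%N.
Definition Cn (h l : nat) := (4 * h * Kc h l + 2 * N0 h l * (2 * h) ^ l)%N.
Definition eta (h l : nat) : R := / INR (Mc h l).
Definition gam (h l : nat) : R := / INR (Kc h l).

Section Potential.
Local Open Scope R_scope.

Lemma pow_bern (x : R) (k : nat) : 0 <= x <= 1 -> 1 - INR k * x <= (1 - x) ^ k.
Proof.
move=> hx; elim: k => [|k IH]; first by simpl; lra.
rewrite S_INR /=.
have h1 : 0 <= 1 - x by lra.
have := Rmult_le_compat_l _ _ _ h1 IH.
have := pos_INR k; nra.
Qed.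

Lemma pow_bern_plus (x : R) (k : nat) : 0 <= x -> 1 + INR k * x <= (1 + x) ^ k.
Proof.
move=> hx; elim: k => [|k IH]; first by simpl; lra.
rewrite S_INR /=.
have h1 : 0 <= 1 + x by lra.
have := Rmult_le_compat_l _ _ _ h1 IH.
have := pos_INR k; nra.
Qed.

Lemma exp_le (x y : R) : x <= y -> exp x <= exp y.
Proof. case/Rle_lt_or_eq_dec => [H|->]; [left; exact: exp_increasing | lra]. Qed.

Lemma exp_nat (N : nat) (x : R) : exp (INR N * x) = exp x ^ N.
Proof.
elim: N => [|N IH]; first by rewrite /= Rmult_0_l exp_0.
by rewrite S_INR Rmult_plus_distr_r Rmult_1_l exp_plus IH /= Rmult_comm.
Qed.

Lemma exp_half_le2 : exp (/2) <= 2.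
Proof.
have H : exp (/2) * exp (/2) = exp 1 by rewrite -exp_plus; congr exp; lra.
have := exp_le_3; have := exp_pos (/2); nra.
Qed.

Lemma eta_pow (h l k : nat) : (1 <= h)%N -> (k <= l)%N -> 3/4 <= (1 - eta h l) ^ k.
Proof.
move=> hh hk.
have pM : (1 <= Mc h l)%N by rewrite /Mc; lia.
have hM : 4 * (INR l + 1) <= INR (Mc h l).
  have E4 : INR 4 = 4 by simpl; lra.
  rewrite /Mc !mult_INR E4 (S_INR l).
  have a : 1 <= INR h by have := INR_leq hh.
  have b : 0 <= INR l + 1 by have := pos_INR l; lra.
  have := Rmult_le_compat_r _ _ _ b a; lra.
have pM' : 0 < INR (Mc h l) by apply: INR_pos.
have hkl : INR k <= INR l by apply: INR_leq.
have he : 0 <= eta h l <= 1.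
  rewrite /eta; split; first by left; apply: Rinv_0_lt_compat.
  rewrite -Rinv_1; apply: Rinv_le_contravar; first lra.
  by have := INR_leq pM.
apply: Rle_trans (pow_bern k he).
have : INR k * eta h l <= 1/4; last by lra.
rewrite /eta.
have pl : 0 <= INR l by apply: pos_INR.
apply: (Rmult_le_reg_r (INR (Mc h l))) => //.
rewrite Rmult_assoc Rinv_l; lra.
Qed.

Lemma pow_n_bound (n : nat) : (8 <= n)%N -> 1 / 256 <= (1 - 2 / INR n) ^ n.
Proof.
move=> hn.
have pn : 8 <= INR n by have := INR_leq hn; rewrite /=; lra.
have hb : 0 <= 1 - 2 / INR n <= 1.
  have : 2 / INR n <= 1 by apply: div_le; lra.
  have : 0 <= 2 / INR n by apply: Rle_mult_inv_pos; lra.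
  lra.
set j := (n %/ 4).+1.
have hd := divn_eq n 4%N; have hmd := ltn_pmod n (isT : (0 < 4)%N).
have ej : j = (n %/ 4).+1 by [].
clearbody j.
have hj : (n <= 4 * j)%N by lia.
have E : (1 - 2 / INR n) ^ (4 * j) <= (1 - 2 / INR n) ^ n.
  rewrite -(subnKC hj) pow_add.
  have : (1 - 2 / INR n) ^ (4 * j - n) <= 1.
    by have := pow_incr _ _ (4 * j - n) hb; rewrite pow1.
  have : 0 <= (1 - 2 / INR n) ^ n by apply: pow_le; lra.
  nra.
apply: Rle_trans E.
rewrite mulnC pow_mult.
have hj2 : 2 * INR j <= 3 / 4 * INR n.
  have : (8 * j <= 3 * n)%N by lia.
  have E8 : INR 8 = 8 by simpl; lra.
  have E6 : INR 3 = 3 by simpl; lra.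
  by move/INR_leq; rewrite !mult_INR E8 E6 => ?; lra.
have hx : 0 <= 2 / INR n <= 1 by split; [apply: Rle_mult_inv_pos; lra | apply: div_le; lra].
have B := pow_bern j hx.
have : 1 / 4 <= 1 - INR j * (2 / INR n).
  have : INR j * (2 / INR n) <= 3 / 4.
    have E2 : INR j * (2 / INR n) = (2 * INR j) / INR n by field; lra.
    rewrite E2; apply: div_le; lra.
  lra.
move=> H14.
have H' : 1 / 4 <= (1 - 2 / INR n) ^ j by lra.
have : (1 / 4) ^ 4 <= ((1 - 2 / INR n) ^ j) ^ 4 by apply: pow_incr; lra.
by simpl; lra.
Qed.

End Potential.

Section Potential2.
Local Open Scope R_scope.

Lemma potential (eps : R) (n l h s k : nat) : 0 < eps < 1 -> (1 <= h)%N -> (k <= l)%N ->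
  (N0 h l <= n)%N -> INR (Cn h l) * ln (/ eps) < INR n -> (n < h * s + l)%N ->
  1 < eps * (1 - eta h l) ^ k * (1 + gam h l) ^ s * (1 - 2 / INR n) ^ n.
Proof.
move=> heps hh hk hn hC hs.
have hq : (1 <= Kc h l)%N by rewrite /Kc /Mc; nia.
set q := Kc h l in hq.
have hn' : (2 * l + 20 * h * q + 8 <= n)%N by [].
set N := s %/ q.
have hd := divn_eq s q; have hmd := ltn_pmod s hq.
have hsq : (s < q * N.+1)%N by rewrite -/N in hd; nia.
have hhs : (h * s < h * q * N.+1)%N by rewrite -mulnA ltn_pmul2l.
have HN9 : (9 <= N)%N by nia.
have HN : (2 * n <= 4 * h * q * (N - 9))%N by nia.
have pq : 0 < INR q by apply: INR_pos.
have hg0 : 0 <= gam h l by left; apply: Rinv_0_lt_compat.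
have g2 : 2 <= (1 + gam h l) ^ q.
  have := pow_bern_plus q hg0; rewrite /gam -/q Rinv_r; lra.
have gN : 2 ^ N <= (1 + gam h l) ^ s.
  apply: Rle_trans (_ : (1 + gam h l) ^ (q * N) <= _).
    by rewrite pow_mult; apply: pow_incr; lra.
  apply: Rle_pow; first lra.
  by apply/leP; rewrite -/N in hd; lia.
have pC : 0 < INR (Cn h l) by apply: INR_pos; rewrite /Cn; nia.
have hl : ln (/ eps) < INR n / INR (Cn h l).
  apply: (Rmult_lt_reg_l (INR (Cn h l))) => //.
  by rewrite /Rdiv -Rmult_assoc (Rmult_comm _ (INR n)) Rmult_assoc Rinv_r; lra.
have he1 : / eps < exp (INR n / INR (Cn h l)).
  rewrite -{1}(exp_ln (/ eps)); last by apply: Rinv_0_lt_compat; lra.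
  exact: exp_increasing.
have he2 : exp (INR n / INR (Cn h l)) <= 2 ^ (N - 9).
  apply: Rle_trans (_ : exp (INR (N - 9) * / 2) <= _).
    apply: exp_le.
    have : 2 * INR n <= INR (Cn h l) * INR (N - 9).
      rewrite -mult_INR; have E2 : 2 = INR 2 by [].
      rewrite E2 -mult_INR; apply: INR_leq.
      apply: leq_trans HN _; rewrite leq_mul2r /Cn leq_addr orbT //.
    move=> H2; apply: (Rmult_le_reg_l (2 * INR (Cn h l))); first lra.
    have E3 : 2 * INR (Cn h l) * (INR n / INR (Cn h l)) = 2 * INR n by field; lra.
    rewrite E3; lra.
  rewrite exp_nat; apply: pow_incr; split; [left; apply: exp_pos | apply: exp_half_le2].
have h1 : 1 < eps * 2 ^ (N - 9).
  have : / eps < 2 ^ (N - 9) by lra.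
  move=> H; apply: (Rmult_lt_reg_l (/ eps)); first by apply: Rinv_0_lt_compat; lra.
  by rewrite -Rmult_assoc Rinv_l ?Rmult_1_l ?Rmult_1_r; lra.
have E9 : 2 ^ N = 2 ^ (N - 9) * 512.
  by rewrite -{1}(subnK HN9) pow_add /=; lra.
have b1 := eta_pow hh hk.
have b2 : 1 / 256 <= (1 - 2 / INR n) ^ n by apply: pow_n_bound; rewrite /N0 in hn'; lia.
have p2 : 0 < 2 ^ (N - 9) by apply: pow_lt; lra.
have : eps * (3 / 4) * 2 ^ N * (1 / 256) <= eps * (1 - eta h l) ^ k * (1 + gam h l) ^ s * (1 - 2 / INR n) ^ n.
  apply: Rmult_le_compat.
  - have : 0 < 2 ^ N by apply: pow_lt; lra.
    nra.
  - lra.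
  - apply: Rmult_le_compat => //.
    + nra.
    + have : 0 < 2 ^ N by apply: pow_lt; lra.
      lra.
    + apply: Rmult_le_compat_l => //; lra.
  - done.
rewrite E9; nra.
Qed.

End Potential2.

Lemma sum_sub_const (m S : nat) (f : 'I_m -> nat) : (forall a, f a <= S) ->
  \sum_a (S - f a) = m * S - \sum_a f a.
Proof.
move=> hf; apply/eqP; rewrite -(eqn_add2r (\sum_a f a)) -big_split /=.
rewrite (eq_bigr (fun _ => S)); last by move=> a _; rewrite subnK.
rewrite sum_nat_const card_ord subnK //.
have -> : m * S = \sum_(a : 'I_m) S by rewrite sum_nat_const card_ord.
by apply: leq_sum.
Qed.

Lemma dense_stage (l h m n : nat) (H : configuration l h) (F : 'I_h -> {set cube m n}) (eps : R) :
  (0 < eps < 1)%R -> (1 <= h)%N -> (0 < n)%N -> (2 * h * n < m)%N -> (l <= n)%N ->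
  (INR ((2 * h) ^ l)%N * (1 - eps) <= Rinv 2)%R ->
  forall d k w Phi, (k + d = l)%N -> struct H k k w Phi ->
  (forall j, INR (m ^ (n - k))%N - INR (cnt (F j) (w j) k) <=
             INR (m ^ (n - k))%N * (INR ((2 * h) ^ k)%N * (1 - eps)))%R ->
  cross_contain H F.
Proof.
move=> heps hh hn hm hl hden; have hm0 : (0 < m)%N by lia.
have hhm : (h < m)%N by nia.
elim=> [|d IH] k w Phi hkd Hs Hc.
- have hkl : k = l by move: hkd; rewrite addn0.
  move: Hs Hc; rewrite hkl => Hs Hc.
  apply: (final_stage hhm (_ : l + (n - l) = n) Hs); first by lia.
  move=> j; have := Hc j; set P := (m ^ (n - l))%N; set c := cnt _ _ _ => Hcj.
  have HP : (P <= 2 * c)%N.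
    apply: leq_INR; rewrite mult_INR.
    have : (INR P * (INR ((2 * h) ^ l)%N * (1 - eps)) <= INR P * / 2)%R.
      apply: Rmult_le_compat_l => //; apply: pos_INR.
    simpl; lra.
  have P0 : (0 < P)%N by rewrite /P expn_gt0 hm0.
  have A : (m * P <= 2 * (m * c))%N by rewrite mulnCA leq_mul2l HP orbT.
  have B : (2 * h * n * P < m * P)%N by rewrite ltn_pmul2r.
  have C : (2 * (P * ((n - l) * h)) <= 2 * h * n * P)%N.
    have : ((n - l) * h <= n * h)%N by rewrite leq_mul2r leq_subr orbT.
    nia.
  have : (2 * (P * ((n - l) * h)) < 2 * (m * c))%N by apply: leq_trans A; apply: leq_ltn_trans B.
  by rewrite ltn_mul2l.
- have hk : (k < l)%N by lia.
  have ht : (k < n)%N by lia.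
  set S := (m ^ (n - k.+1))%N.
  have ES : (m ^ (n - k) = m * S)%N by rewrite /S -expnS; congr (_ ^ _); lia.
  pose c j := cnt (F j) (w j) k.
  pose cc j a := cnt (F j) (upd (w j) k a) k.+1.
  have ccS : forall j a, (cc j a <= S)%N by move=> j a; apply: cnt_le.
  have csum : forall j, c j = (\sum_a cc j a)%N by move=> j; apply: cnt_split.
  have cP : forall j, (c j <= m * S)%N by move=> j; rewrite -ES; apply: cnt_le; lia.
  pose G := [set a | [forall j, m * (S - cc j a) <= 2 * h * (m * S - c j)]].
  have HG : (h <= #|G|)%N.
    have Hb : forall j, (#|[set a | 2 * h * (m * S - c j) < m * (S - cc j a)]| * (2 * h) < m)%N.
      move=> j; have := bad_card (2 * h) (fun a => S - cc j a) hm0.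
      by rewrite sum_sub_const // -csum.
    have HC : (#|~: G| <= \sum_j #|[set a | 2 * h * (m * S - c j) < m * (S - cc j a)]|)%N.
      apply: leq_trans (card_exists_le (fun j a => 2 * h * (m * S - c j) < m * (S - cc j a))).
      apply: subset_leq_card; apply/subsetP => a; rewrite !inE negb_forall => /existsP[j Hj].
      by apply/existsP; exists j; rewrite ltnNge.
    have HS : ((\sum_j #|[set a | 2 * h * (m * S - c j) < m * (S - cc j a)]|) * (2 * h) <= h * (m - 1))%N.
      rewrite big_distrl /=; apply: leq_trans (_ : \sum_(j : 'I_h) (m - 1) <= _)%N.
        apply: leq_sum => j _; have := Hb j => X.
        by rewrite subn1 -ltnS prednK //; exact: (leq_ltn_trans (leq0n _) X).
      by rewrite sum_nat_const card_ord.
    have := cardsC G; rewrite card_ord.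
    set X := (\sum_j _)%N in HC HS.
    have : (2 * X <= m - 1)%N.
      by rewrite -(leq_pmul2l (hh : (0 < h)%N)); move: HS; nia.
    have : (2 * h < m)%N by nia.
    lia.
  have [a [Phi' [HaG Hs']]] := struct_pattern ht hk HG Hs.
  apply: (IH k.+1 _ Phi' _ Hs'); first by lia.
  move=> j; have := Hc j; rewrite ES -/S.
  have := HaG j; rewrite inE => /forallP /(_ j) Hj.
  rewrite -/(cc j (a j)) -/(c j) in Hj *.
  rewrite -/(cc j (a j)).
  have /INR_leq := Hj; rewrite !mult_INR (INR_subn (ccS j (a j))) (INR_subn (cP j)) mult_INR.
  rewrite expnS mult_INR mult_INR.
  have pm : (0 < INR m)%R by apply: INR_pos.
  have pS : (0 <= INR S)%R by apply: pos_INR.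
  have pk : (0 <= INR ((2 * h) ^ k)%N)%R by apply: pos_INR.
  have E2 : INR 2 = 2%R by [].
  rewrite E2 => H1 H2.
  apply: (Rmult_le_reg_l (INR m)) => //.
  have := Rmult_le_compat_l (2 * INR h) _ _ _ H2.
  have : (0 <= 2 * INR h)%R by have := pos_INR h; lra.
  move=> H3 /(_ H3) H4.
  nra.
Qed.

Lemma exists_max (m : nat) (f : 'I_m -> nat) (a0 : 'I_m) : exists b, forall a, f a <= f b.
Proof. by case: (@arg_maxnP _ a0 xpredT f) => // b _ Hb; exists b => a; apply: Hb. Qed.

Definition Xf (h l m : nat) (eps : R) (k t : nat) : R :=
  ((1 - eta h l) ^ k * eps - INR (t - k) * INR h / INR m)%R.
Definition Ef (h l n : nat) (eps : R) (k s t : nat) : R :=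
  (eps * (1 - eta h l) ^ k * (1 + gam h l) ^ s * (1 - 2 / INR n) ^ t)%R.

Section XE.
Local Open Scope R_scope.

Lemma eta_01 (h l : nat) : (1 <= h)%N -> 0 <= eta h l <= 1.
Proof.
move=> hh; have pM : (1 <= Mc h l)%N by rewrite /Mc; nia.
rewrite /eta; split; first by left; apply: Rinv_0_lt_compat; apply: INR_pos.
rewrite -Rinv_1; apply: Rinv_le_contravar; first lra.
by have := INR_leq pM.
Qed.

Lemma gam_pos (h l : nat) : (1 <= h)%N -> 0 <= gam h l.
Proof.
move=> hh; have pK : (1 <= Kc h l)%N by rewrite /Kc /Mc; nia.
by rewrite /gam; left; apply: Rinv_0_lt_compat; apply: INR_pos.
Qed.

Lemma Xf_a h l m eps k t : (1 <= h)%N -> (0 < m)%N ->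
  Xf h l m eps k.+1 t.+1 <= (1 - eta h l) * Xf h l m eps k t.
Proof.
move=> hh hm; rewrite /Xf subSS /=.
have := eta_01 l hh; have pm : 0 < INR m by apply: INR_pos.
have : 0 <= INR (t - k) * INR h / INR m.
  apply: Rle_mult_inv_pos => //; apply: Rmult_le_pos; apply: pos_INR.
nra.
Qed.



Lemma Xf_b h l m eps k t : (k <= t)%N -> (0 < m)%N ->
  Xf h l m eps k t.+1 = Xf h l m eps k t - INR h / INR m.
Proof.
move=> hk hm; have pm : 0 < INR m by apply: INR_pos.
rewrite /Xf (_ : (t.+1 - k = (t - k).+1)%N); last by lia.
rewrite S_INR; field; lra.
Qed.

Lemma Ef_t h l n eps k s t : Ef h l n eps k s t.+1 = (1 - 2 / INR n) * Ef h l n eps k s t.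
Proof. by rewrite /Ef /=; ring. Qed.

Lemma Ef_nonneg h l n eps k s t : (1 <= h)%N -> (2 <= n)%N -> 0 < eps ->
  0 <= Ef h l n eps k s t.
Proof.
move=> hh hn he; rewrite /Ef.
have pn : 2 <= INR n by have := INR_leq hn.
have h2 : 0 <= 1 - 2 / INR n.
  have : 2 / INR n <= 1 by apply: div_le; lra.
  lra.
have := eta_01 l hh; have := gam_pos l hh => g e.
repeat apply: Rmult_le_pos; try lra; apply: pow_le; lra.
Qed.

Lemma Ef_a h l n eps k s t : (1 <= h)%N -> (2 <= n)%N -> 0 < eps ->
  Ef h l n eps k.+1 s t.+1 <= (1 - eta h l) * Ef h l n eps k s t.
Proof.
move=> hh hn he; rewrite Ef_t.
have pn : 2 <= INR n by have := INR_leq hn.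
have h2 : 0 <= 1 - 2 / INR n <= 1.
  have : 2 / INR n <= 1 by apply: div_le; lra.
  have : 0 <= 2 / INR n by apply: Rle_mult_inv_pos; lra.
  lra.
have E : Ef h l n eps k.+1 s t = (1 - eta h l) * Ef h l n eps k s t by rewrite /Ef /=; ring.
rewrite E.
have := @Ef_nonneg h l n eps k s t hh hn he; have := eta_01 l hh => e1 e2.
have : 0 <= (1 - eta h l) * Ef h l n eps k s t by apply: Rmult_le_pos; lra.
nra.
Qed.

Lemma Ef_g h l n eps k s t : (1 <= h)%N -> (2 <= n)%N -> 0 < eps ->
  Ef h l n eps k s.+1 t.+1 <= (1 + gam h l) * Ef h l n eps k s t.
Proof.
move=> hh hn he; rewrite Ef_t.
have pn : 2 <= INR n by have := INR_leq hn.
have h2 : 0 <= 1 - 2 / INR n <= 1.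
  have : 2 / INR n <= 1 by apply: div_le; lra.
  have : 0 <= 2 / INR n by apply: Rle_mult_inv_pos; lra.
  lra.
have E : Ef h l n eps k s.+1 t = (1 + gam h l) * Ef h l n eps k s t by rewrite /Ef /=; ring.
rewrite E.
have := @Ef_nonneg h l n eps k s t hh hn he; have := gam_pos l hh => e1 e2.
have : 0 <= (1 + gam h l) * Ef h l n eps k s t by apply: Rmult_le_pos; lra.
nra.
Qed.

End XE.

Lemma sparse_stage (l h m n : nat) (H : configuration l h) (F : 'I_h -> {set cube m n}) (eps : R) :
  (0 < eps < 1)%R -> (1 <= h)%N -> (N0 h l <= n)%N -> (l <= n)%N ->
  (2 * INR h * INR n < INR m * eps)%R ->
  (INR (Cn h l) * ln (/ eps) < INR n)%R ->
  forall d t k w Phi (s : 'I_h -> nat), (t + d = n)%N -> (k <= l)%N -> (k <= t)%N ->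
  struct H t k w Phi -> (t - k <= \sum_j s j)%N ->
  (forall j, INR (m ^ (n - t))%N * Xf h l m eps k t <= INR (cnt (F j) (w j) t))%R ->
  (forall j, INR (m ^ (n - t))%N * Ef h l n eps k (s j) t <= INR (cnt (F j) (w j) t))%R ->
  cross_contain H F.
Proof.
move=> heps hh hN hl hme hC.
have hn8 : (8 <= n)%N by move: hN; rewrite /N0; lia.
have hmR : (INR (2 * h * n) < INR m)%R.
  rewrite !mult_INR; have E2 : INR 2 = 2%R by [].
  rewrite E2; have : (0 <= INR m)%R by apply: pos_INR.
  move=> ?; nra.
have hm : (2 * h * n < m)%N by apply: ltn_INR.
have hm0 : (0 < m)%N by lia.
have hhm : (h < m)%N by nia.
have pm : (0 < INR m)%R by apply: INR_pos.
have ph : (1 <= INR h)%R by have := INR_leq hh.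
have pn : (8 <= INR n)%R by have := INR_leq hn8; rewrite /=; lra.
have hme0 : (0 <= INR m * eps)%R by nra.
have Xb : forall k t, (k <= l)%N -> (t <= n)%N ->
    (INR h * INR n / 2 <= INR m * Xf h l m eps k t)%R.
  move=> k t hk ht; rewrite /Xf.
  have e34 := eta_pow hh hk.
  have htk : (INR (t - k) <= INR n)%R by apply: INR_leq; lia.
  have E : (INR m * ((1 - eta h l) ^ k * eps - INR (t - k) * INR h / INR m)
            = INR m * eps * (1 - eta h l) ^ k - INR (t - k) * INR h)%R by field; lra.
  rewrite E.
  have : (INR (t - k) * INR h <= INR n * INR h)%R by have := pos_INR h; nra.
  have := Rmult_le_compat_l _ _ _ hme0 e34.
  nra.
have klcase : forall t w Phi, (t <= n)%N -> struct H t l w Phi ->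
    (forall j, INR (m ^ (n - t))%N * Xf h l m eps l t <= INR (cnt (F j) (w j) t))%R ->
    cross_contain H F.
  move=> t w Phi ht Hs HI1.
  apply: (final_stage hhm (_ : t + (n - t) = n) Hs); first by lia.
  move=> j; have := HI1 j; set P := (m ^ (n - t))%N; set c := cnt _ _ _ => Hc.
  have P0 : (0 < P)%N by rewrite /P expn_gt0 hm0.
  apply: ltn_INR; rewrite !mult_INR.
  have pP : (0 < INR P)%R by apply: INR_pos.
  have e34 := eta_pow hh (leqnn l).
  have hX : (INR (n - t) * INR h < INR m * Xf h l m eps l t)%R.
    rewrite /Xf.
    have E : (INR m * ((1 - eta h l) ^ l * eps - INR (t - l) * INR h / INR m)
            = INR m * eps * (1 - eta h l) ^ l - INR (t - l) * INR h)%R by field; lra.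
    rewrite E.
    have ENT : (INR (n - t) + INR (t - l) <= INR n)%R by rewrite -plus_INR; apply: INR_leq; lia.
    have := Rmult_le_compat_l _ _ _ hme0 e34.
    have := pos_INR (t - l); have := pos_INR (n - t); nra.
  have := Rmult_lt_compat_l _ _ _ pP hX; nra.
elim=> [|d IH] t k w Phi s htd hkl hkt Hs Hsum HI1 HI2.
- case: (ltnP k l) => hkl'; last first.
    have ekl : k = l by apply/eqP; rewrite eqn_leq hkl hkl'.
    by move: Hs HI1; rewrite ekl => Hs HI1; apply: (klcase t w Phi) => //; lia.
  exfalso.
  have htn : t = n by lia.
  have [j Hj] : exists j, (n < h * s j + l)%N.
    case: (pickP (fun j => n < h * s j + l)%N) => [j Hj|Hn]; first by exists j.
    have : (h * \sum_j s j <= h * (n - l))%N.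
      rewrite big_distrr /=; apply: leq_trans (_ : \sum_(j : 'I_h) (n - l) <= _)%N.
        by apply: leq_sum => j _; have := Hn j; rewrite /= ltnNge => /negbFE; lia.
      by rewrite sum_nat_const card_ord.
    rewrite leq_pmul2l //; lia.
  have := HI2 j; rewrite htn subnn expn0 /=.
  have : (cnt (F j) (w j) n <= 1)%N by have := cnt_le (F j) (w j) (leqnn n); rewrite subnn expn0.
  move/INR_leq => /= Hc1.
  have := potential (s := s j) heps hh (ltnW hkl') hN hC Hj.
  rewrite /Ef; lra.
- case: (ltnP k l) => hkl'; last first.
    have ekl : k = l by apply/eqP; rewrite eqn_leq hkl hkl'.
    by move: Hs HI1; rewrite ekl => Hs HI1; apply: (klcase t w Phi) => //; lia.
  have ht : (t < n)%N by lia.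
  set S := (m ^ (n - t.+1))%N.
  have ES : (m ^ (n - t) = m * S)%N by rewrite /S -expnS; congr (_ ^ _); lia.
  have pS : (0 < S)%N by rewrite /S expn_gt0 hm0.
  pose c j := cnt (F j) (w j) t.
  pose cc j a := cnt (F j) (upd (w j) t a) t.+1.
  have ccS : forall j a, (cc j a <= S)%N by move=> j a; apply: cnt_le.
  have csum : forall j, c j = (\sum_a cc j a)%N by move=> j; apply: cnt_split.
  have Xbt := Xb k t hkl (ltnW ht).
  have cbig : forall j, (h * S * n <= 2 * c j)%N.
    move=> j; apply: leq_INR; have := HI1 j; rewrite ES !mult_INR -/(c j) => H1.
    have E2 : INR 2 = 2%R by [].
    rewrite E2.
    have pS' : (0 <= INR S)%R by apply: pos_INR.
    have := Rmult_le_compat_l _ _ _ pS' Xbt; nra.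
  have chS : forall j, (h * S <= c j)%N by move=> j; have := cbig j; nia.
  set M := Mc h l.
  have hM : (1 <= M)%N by rewrite /M /Mc; nia.
  pose G := [set a | [forall j, (M - 1) * c j <= M * m * cc j a]].
  case: (leqP h #|G|) => HG.
  +
    have [a [Phi' [HaG Hs']]] := struct_pattern ht hkl' HG Hs.
    apply: (IH t.+1 k.+1 _ Phi' s _ hkl' _ Hs') => //; first by lia.
    * move=> j; have := HaG j; rewrite inE => /forallP /(_ j) Hj.
      have HI1' : (INR (m * S) * Xf h l m eps k t <= INR (c j))%R by rewrite -ES; apply: HI1.
      have H1 := inv_a hM hm0 Hj HI1'.
      apply: Rle_trans H1; apply: Rmult_le_compat_l; first by apply: pos_INR.
      by apply: Xf_a.
    * move=> j; have := HaG j; rewrite inE => /forallP /(_ j) Hj.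
      have HI2' : (INR (m * S) * Ef h l n eps k (s j) t <= INR (c j))%R by rewrite -ES; apply: HI2.
      have H1 := inv_a hM hm0 Hj HI2'.
      apply: Rle_trans H1; apply: Rmult_le_compat_l; first by apply: pos_INR.
      apply: Ef_a => //; [lia | lra].
  +
    have [j0 Hj0] : exists j0, (m < h * #|[set a | M * m * cc j0 a < (M - 1) * c j0]| + h)%N.
      case: (pickP (fun j0 => m < h * #|[set a | M * m * cc j0 a < (M - 1) * c j0]| + h)%N) => [j0 H0|Hn].
        by exists j0.
      exfalso.
      have HC : (#|~: G| <= \sum_j #|[set a | M * m * cc j a < (M - 1) * c j]|)%N.
        apply: leq_trans (card_exists_le (fun j a => M * m * cc j a < (M - 1) * c j)).
        apply: subset_leq_card; apply/subsetP => a; rewrite !inE negb_forall => /existsP[j Hj].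
        by apply/existsP; exists j; rewrite ltnNge.
      have HS : (h * \sum_j #|[set a | M * m * cc j a < (M - 1) * c j]| <= h * (m - h))%N.
        rewrite big_distrr /=; apply: leq_trans (_ : \sum_(j : 'I_h) (m - h) <= _)%N.
          apply: leq_sum => j _; have := Hn j; rewrite /= ltnNge => /negbFE X.
          by rewrite leq_subRL ?(ltnW hhm) // addnC.
        by rewrite sum_nat_const card_ord.
      rewrite leq_pmul2l // in HS.
      have := cardsC G; rewrite card_ord; lia.
    have [b Hb] := exists_max (cc j0) (w j0 (Ordinal ht)).
    have Hgain : ((2 * h * M + 1) * c j0 <= 2 * h * M * m * cc j0 b)%N.
      rewrite csum; apply: gain => //.
      * rewrite -csum; have := chS j0; have : (0 < h * S)%N by rewrite muln_gt0 hh pS.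
        lia.
      * by nia.
      * by rewrite -csum.
    pose A j := if j == j0 then [set: 'I_m] else [set a | c j <= m * cc j a + h * S].
    have HA : forall j, (h + #|[set b]| <= #|A j|)%N.
      move=> j; rewrite cards1 /A; case: (j =P j0) => _.
      * by rewrite cardsT card_ord addn1.
      * rewrite addn1; have := acc_card (c := cc j) hhm (ccS j).
        by rewrite -csum => /(_ (chS j)).
    have [v [vinj Hv]] := sdr HA.
    pose v' j := if j == j0 then b else v j.
    have v'inj : injective v'.
      move=> j1 j2; rewrite /v'.
      case: (j1 =P j0) => [->|N1]; case: (j2 =P j0) => [->|N2] //.
      * by move=> E; have [_] := Hv j2; rewrite -E inE eqxx.
      * by move=> E; have [_] := Hv j1; rewrite E inE eqxx.
      * exact: vinj.
    pose s' j := (s j + (j == j0))%N.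
    have hK : (1 <= Kc h l)%N by rewrite /Kc -/M; nia.
    have HX0 : (0 <= Xf h l m eps k t)%R.
      have H0 : (0 < INR h * INR n / 2)%R by nra.
      have : (0 < INR m * Xf h l m eps k t)%R by lra.
      move=> H2; apply: Rlt_le; apply: (Rmult_lt_reg_l (INR m)) => //; lra.
    have Hgain' : ((Kc h l + 1) * c j0 <= Kc h l * m * cc j0 b)%N by [].
    have pSR : (0 <= INR S)%R by apply: pos_INR.
    have hn2 : (2 <= n)%N by lia.
    have hg := gam_pos l hh.
    apply: (IH t.+1 k (fun j => upd (w j) t (v' j)) Phi s'); first by lia.
    * by [].
    * by lia.
    * exact: struct_distinct.
    * have E1 : (\sum_(j : 'I_h) (j == j0) = 1)%N.
        by rewrite (bigD1 j0) //= eqxx big1 // => j /negbTE ->.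
      have E2 : (\sum_j s j + 1 <= \sum_j s' j)%N by rewrite -E1 -big_split.
      by apply: leq_trans E2; lia.
    * move=> j; rewrite Xf_b //.
      have HI1' : (INR (m * S) * Xf h l m eps k t <= INR (c j))%R by rewrite -ES; apply: HI1.
      rewrite /v'; case: (j =P j0) => [Ej|Nj].
      -- rewrite Ej in HI1' *.
         have H1 := inv_gain hK hm0 Hgain' HI1'.
         apply: Rle_trans H1; apply: Rmult_le_compat_l => //.
         have := HX0; have : (0 <= INR h / INR m)%R by apply: Rle_mult_inv_pos; lra.
         rewrite -/(gam h l); nra.
      -- have [Hvj _] := Hv j; move: Hvj; rewrite /A; case: (j =P j0) => // _; rewrite inE => Hvj.
         exact: inv_other hm0 Hvj HI1'.
    * move=> j.
      have HI2' : (INR (m * S) * Ef h l n eps k (s j) t <= INR (c j))%R by rewrite -ES; apply: HI2.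
      rewrite /v' /s'; case: (j =P j0) => [Ej|Nj].
      -- rewrite Ej addn1 in HI2' *.
         have H1 := inv_gain hK hm0 Hgain' HI2'.
         apply: Rle_trans H1; apply: Rmult_le_compat_l => //.
         rewrite -/(gam h l); apply: Ef_g => //; lra.
      -- rewrite addn0.
         have [Hvj _] := Hv j; move: Hvj; rewrite /A; case: (j =P j0) => // _; rewrite inE => Hvj.
         rewrite Ef_t; exact: inv_other2 hm0 hn2 Hvj (cbig j) HI2'.
Qed.

Lemma pow_expn (a b : nat) : Nat.pow a b = (a ^ b)%N.
Proof. by elim: b => [|b IH] //=; rewrite expnS -IH. Qed.

Theorem lemma7p3 (l h : nat) :
  exists C : R, (0 < C)%R /\
    forall (H : configuration l h) (eps : R) (m n : nat)
           (F : 'I_h -> {set cube m n}),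
      (0 < eps < 1)%R ->
      (forall i, mu (F i) > eps)%R ->
      (l <= n)%N ->
      (INR n > C * ln (/ eps))%R ->
      (INR m > 2 * INR h * INR n / eps)%R ->
      cross_contain H F.
Proof.
exists (INR (Cn h l) + 1)%R; split.
  by have := pos_INR (Cn h l); lra.
move=> H eps m n F heps hF hl hnC hmR.
case: (posnP h) => [h0|hh].
  subst h.
  have x : 'I_0 -> cube m n by move=> [j hj]; exfalso; rewrite ltn0 in hj.
  exists x, (widen_ord hl); split; first by move=> [j hj].
  split; first by move=> k1 k2 /(congr1 val) /= /val_inj.
  by move=> [j hj].
have ieps : (1 < / eps)%R.
  rewrite -Rinv_1; apply: Rinv_lt_contravar; lra.
have lpos : (0 < ln (/ eps))%R by rewrite -ln_1; apply: ln_increasing; lra.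
have pC : (0 <= INR (Cn h l))%R by apply: pos_INR.
have hC : (INR (Cn h l) * ln (/ eps) < INR n)%R by nra.
have npos : (0 < INR n)%R by nra.
have hn : (0 < n)%N by apply: ltn_INR.
have ph : (1 <= INR h)%R by have := INR_leq hh.
have hme : (2 * INR h * INR n < INR m * eps)%R.
  have E : (2 * INR h * INR n = (2 * INR h * INR n / eps) * eps)%R by field; lra.
  rewrite E; apply: Rmult_lt_compat_r; lra.
have hmn : (2 * h * n < m)%N.
  apply: ltn_INR; rewrite !mult_INR; have E2 : INR 2 = 2%R by [].
  rewrite E2; have := pos_INR m; nra.
have hm0 : (0 < m)%N by nia.
pose w0 : 'I_h -> cube m n := fun _ => [ffun _ => Ordinal hm0].
have HF : forall j, (eps * INR (m ^ n)%N < INR (cnt (F j) (w0 j) 0))%R.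
  move=> j; have := hF j; rewrite /mu cnt0 pow_expn.
  have pP : (0 < INR (m ^ n)%N)%R by apply: INR_pos; rewrite expn_gt0 hm0.
  move=> H1; have := Rmult_lt_compat_r _ _ _ pP H1.
  by rewrite /Rdiv Rmult_assoc Rinv_l; lra.
case: (leqP (N0 h l) n) => hN.
- apply: (sparse_stage heps hh hN hl hme hC (d := n) (t := 0) (k := 0) (w := w0)
           (Phi := widen_ord hl) (s := fun _ => 0%N)) => //.
  + move=> j; rewrite subn0 /Xf /=; have := HF j; lra.
  + move=> j; rewrite subn0 /Ef /=; have := HF j; lra.
- have hden : (INR ((2 * h) ^ l)%N * (1 - eps) <= Rinv 2)%R.
    have h1 : (1 - eps <= ln (/ eps))%R.
      have := exp_ineq1_le (- ln (/ eps)).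
      rewrite exp_Ropp exp_ln; last lra.
      by rewrite Rinv_inv; lra.
    have pw : (0 <= INR ((2 * h) ^ l)%N)%R by apply: pos_INR.
    have hN' : (INR n <= INR (N0 h l))%R by apply: INR_leq; lia.
    have hCn : (2 * INR (N0 h l) * INR ((2 * h) ^ l)%N <= INR (Cn h l))%R.
      have E2 : INR 2 = 2%R by [].
      rewrite -E2 -!mult_INR; apply: INR_leq; rewrite /Cn; lia.
    have : (INR ((2 * h) ^ l)%N * ln (/ eps) * INR (Cn h l) <= INR ((2 * h) ^ l)%N * INR n)%R.
      have := Rmult_le_compat_l _ _ _ pw (Rlt_le _ _ hC); lra.
    have : (INR ((2 * h) ^ l)%N * (1 - eps) * INR (Cn h l) <= INR ((2 * h) ^ l)%N * ln (/ eps) * INR (Cn h l))%R.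
      apply: Rmult_le_compat_r => //; apply: Rmult_le_compat_l => //.
    have : (INR ((2 * h) ^ l)%N * INR n <= INR ((2 * h) ^ l)%N * INR (N0 h l))%R.
      by apply: Rmult_le_compat_l.
    move=> A1 A2 A3.
    have pN0 : (8 <= INR (N0 h l))%R.
      have H8 : (8 <= N0 h l)%N by rewrite /N0; lia.
      have E8 : INR 8 = 8%R by simpl; lra.
      by have := INR_leq H8; rewrite E8.
    have pw1 : (1 <= INR ((2 * h) ^ l)%N)%R.
      have : (1 <= (2 * h) ^ l)%N by rewrite expn_gt0; lia.
      by move/INR_leq.
    have Cpos : (0 < INR (Cn h l))%R by nra.
    apply: (Rmult_le_reg_r (INR (Cn h l))) => //.
    nra.
  apply: (dense_stage heps hh hn hmn hl hden (d := l) (k := 0) (w := w0) (Phi := widen_ord hl)) => //.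
  + move=> j; rewrite subn0 expn0 /=; have := HF j; lra.
Qed.
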